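(* Let $0<R<\infty$ and let $f(x)=\sum_{n=0}^\infty a_nx^n$ with $a_n>0$ for all $n$ be convergent on $(-R,R)$. Define $m(x)=f(R-x^2/R)/f(x^2/R)$ for $x\in(0,R)$. If the sequence $\{R(n+1)a_{n+1}/a_n-n\}_{n\ge0}$ is decreasing, then $$\frac{1}{m\big(\sqrt[4]{(R^2-x^2)(R^2-y^2)}\big)}\le\sqrt{m(x)m(y)}\le m(\sqrt{xy})$$ for all $x,y\in(0,R)$, with equality if and only if $x=y$. *)

(* Defs.v *)
From Stdlib Require Import Reals.
From Coquelicot Require Import Coquelicot.
Open Scope R_scope.

Definition mfun (a : nat -> R) (R0 : R) (x : R) : R :=
  PSeries a (R0 - x ^ 2 / R0) / PSeries a (x ^ 2 / R0).

(* Main.v *)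
Require Import Defs.
From Stdlib Require Import Reals.
From Coquelicot Require Import Coquelicot.
Open Scope R_scope.
From Stdlib Require Import Lra Lia Psatz.


Lemma radius_ok (R0 : R) (a : nat -> R) (hR : 0 < R0)
  (hconv : forall x, Rabs x < R0 -> ex_pseries a x) v :
  Rabs v < R0 -> Rbar_lt (Rabs v) (CV_radius a).
Proof.
  intros hv.
  set (r := (Rabs v + R0) / 2).
  assert (hr : Rabs r < R0).
  { unfold r. pose proof (Rabs_pos v). rewrite Rabs_pos_eq; lra. }
  assert (Hle : Rbar_le (Rabs r) (CV_radius a)).
  { apply Rbar_not_lt_le. intro H. apply (CV_disk_outside a r H).
    pose proof (ex_series_lim_0 _ (hconv r hr)) as L.
    eapply is_lim_seq_ext; [|exact L]. intro n. simpl.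
    rewrite pow_n_pow. unfold scal; simpl. unfold mult; simpl. ring. }
  assert (Rabs v < Rabs r).
  { unfold r. pose proof (Rabs_pos v). rewrite (Rabs_pos_eq ((Rabs v + R0)/2)); lra. }
  destruct (CV_radius a) as [c| |]; simpl in *; auto; lra.
Qed.

Lemma pser_lim (R0 : R) (a : nat -> R) (hR : 0 < R0)
  (hconv : forall x, Rabs x < R0 -> ex_pseries a x) x :
  Rabs x < R0 ->
  is_lim_seq (fun N => sum_f_R0 (fun k => a k * x ^ k) N) (PSeries a x).
Proof.
  intros hx. pose proof (PSeries_correct a x (hconv x hx)) as H.
  unfold is_pseries, is_series in H.
  eapply is_lim_seq_ext; [|exact H]. intro N. simpl.
  rewrite sum_n_Reals. apply sum_eq. intros i _.
  rewrite pow_n_pow. unfold scal; simpl. unfold mult; simpl. ring.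
Qed.

Lemma sum_ge0 (f : nat -> R) N : (forall k, 0 <= f k) -> f O <= sum_f_R0 f N.
Proof.
  intros H. induction N; simpl; [lra|]. specialize (H (S N)). lra.
Qed.

Lemma F_pos (R0 : R) (a : nat -> R) (hR : 0 < R0)
  (hpos : forall n, 0 < a n)
  (hconv : forall x, Rabs x < R0 -> ex_pseries a x) v :
  0 <= v < R0 -> 0 < PSeries a v.
Proof.
  intros hv.
  assert (hx : Rabs v < R0) by (rewrite Rabs_pos_eq; lra).
  pose proof (pser_lim R0 a hR hconv v hx) as L.
  assert (Hle : Rbar_le (a O) (PSeries a v)).
  { apply (is_lim_seq_le (fun _ => a O) _ (a O) _) with (2 := is_lim_seq_const _) (3 := L).
    intro N. pose proof (sum_ge0 (fun k => a k * v ^ k) N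
       (fun k => Rmult_le_pos _ _ (Rlt_le _ _ (hpos k)) (pow_le _ _ (proj1 hv)))) as S.
    simpl in S. lra. }
  simpl in Hle. specialize (hpos O). lra.
Qed.


Lemma sum_lin3 (a : nat -> R) U W G u w g N :
  sum_f_R0 (fun k => a k * (U * w ^ k + W * u ^ k - 2 * G * g ^ k)) N =
  U * sum_f_R0 (fun k => a k * w ^ k) N + W * sum_f_R0 (fun k => a k * u ^ k) N
  - 2 * G * sum_f_R0 (fun k => a k * g ^ k) N.
Proof. induction N; simpl; [ring|]. rewrite IHN. ring. Qed.

Lemma amgm u w g p k : 0 < u -> 0 < w -> 0 < g -> g * g = u * w ->
  2 * g ^ p * g ^ k <= u ^ p * w ^ k + w ^ p * u ^ k.
Proof.
  intros hu hw hg e.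
  assert (XY : (u ^ p * w ^ k) * (w ^ p * u ^ k) = (g ^ p * g ^ k) ^ 2).
  { replace ((g ^ p * g ^ k) ^ 2) with ((g * g) ^ p * (g * g) ^ k)
      by (rewrite !Rpow_mult_distr; ring).
    rewrite e, !Rpow_mult_distr. ring. }
  pose proof (pow_lt u p hu). pose proof (pow_lt u k hu).
  pose proof (pow_lt w p hw). pose proof (pow_lt w k hw).
  pose proof (pow_lt g p hg). pose proof (pow_lt g k hg).
  set (xx := u ^ p * w ^ k) in *. set (yy := w ^ p * u ^ k) in *.
  set (zz := g ^ p * g ^ k) in *.
  assert (0 < xx) by (unfold xx; nra). assert (0 < yy) by (unfold yy; nra).
  assert (0 < zz) by (unfold zz; nra).
  assert (E2 : 2 * g ^ p * g ^ k = 2 * zz) by (unfold zz; ring). rewrite E2.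
  assert (P : (xx + yy - 2 * zz) * (xx + yy + 2 * zz) = (xx - yy) ^ 2).
  { replace ((xx + yy - 2 * zz) * (xx + yy + 2 * zz)) with ((xx + yy) ^ 2 - 4 * zz ^ 2) by ring.
    rewrite <- XY. ring. }
  destruct (Rle_or_lt (2 * zz) (xx + yy)) as [h|h]; auto.
  assert (0 <= (xx - yy) ^ 2) by apply pow2_ge_0.
  assert ((xx + yy - 2 * zz) * (xx + yy + 2 * zz) < 0).
  { apply Rmult_neg_pos; lra. }
  lra.
Qed.

Definition Sp (a : nat -> R) x N := sum_f_R0 (fun k => a k * x ^ k) N.

Lemma D_step (a : nat -> R) (hpos : forall n, 0 < a n) u w g N :
  0 < u -> 0 < w -> 0 < g -> g * g = u * w ->
  Sp a u N * Sp a w N - Sp a g N ^ 2 <=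
  Sp a u (S N) * Sp a w (S N) - Sp a g (S N) ^ 2.
Proof.
  intros hu hw hg e. unfold Sp. simpl sum_f_R0 at 4 5 6.
  set (U := u ^ S N). set (W := w ^ S N). set (G := g ^ S N).
  set (al := a (S N)).
  assert (UW : U * W = G * G).
  { unfold U, W, G. rewrite <- !Rpow_mult_distr, e. reflexivity. }
  assert (Hb : 0 <= sum_f_R0 (fun k => a k * (U * w ^ k + W * u ^ k - 2 * G * g ^ k)) N).
  { apply cond_pos_sum. intro k. apply Rmult_le_pos; [apply Rlt_le, hpos|].
    pose proof (amgm u w g (S N) k hu hw hg e). unfold U, W, G. lra. }
  rewrite sum_lin3 in Hb.
  assert (0 < al) by apply hpos.
  set (Su := sum_f_R0 (fun k => a k * u ^ k) N) in *.
  set (Sw := sum_f_R0 (fun k => a k * w ^ k) N) in *.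
  set (Sg := sum_f_R0 (fun k => a k * g ^ k) N) in *.
  assert (Sp_eq : (Su + al * U) * (Sw + al * W) - (Sg + al * G) ^ 2 =
     Su * Sw - Sg ^ 2 + al * (U * Sw + W * Su - 2 * G * Sg) + al * al * (U * W - G * G)) by ring.
  change (u * u ^ N) with U. change (w * w ^ N) with W. change (g * g ^ N) with G.
  rewrite Sp_eq, UW. nra.
Qed.

Lemma CS_strict (R0 : R) (a : nat -> R) (hR : 0 < R0)
  (hpos : forall n, 0 < a n)
  (hconv : forall x, Rabs x < R0 -> ex_pseries a x) u w g :
  0 < u < R0 -> 0 < w < R0 -> 0 < g -> g * g = u * w -> u <> w ->
  PSeries a g ^ 2 < PSeries a u * PSeries a w.
Proof.
  intros hu hw hg e neq.
  assert (gR : g < R0) by nra.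
  assert (Lu := pser_lim R0 a hR hconv u ltac:(rewrite Rabs_pos_eq; lra)).
  assert (Lw := pser_lim R0 a hR hconv w ltac:(rewrite Rabs_pos_eq; lra)).
  assert (Lg := pser_lim R0 a hR hconv g ltac:(rewrite Rabs_pos_eq; lra)).
  assert (L : is_lim_seq (fun N => Sp a u N * Sp a w N - Sp a g N ^ 2)
             (PSeries a u * PSeries a w - PSeries a g ^ 2)).
  { apply is_lim_seq_minus'. apply is_lim_seq_mult'; assumption.
    simpl. eapply is_lim_seq_ext; [| apply (is_lim_seq_mult' _ _ _ _ Lg (is_lim_seq_mult' _ _ _ _ Lg (is_lim_seq_const 1)))].
    intro N. simpl. reflexivity. }
  apply is_lim_seq_incr_1 in L.
  set (D1 := Sp a u 1 * Sp a w 1 - Sp a g 1 ^ 2).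
  assert (Hge : forall N, D1 <= Sp a u (S N) * Sp a w (S N) - Sp a g (S N) ^ 2).
  { induction N. unfold D1; lra. eapply Rle_trans; [exact IHN|]. apply D_step; auto; lra. }
  pose proof (is_lim_seq_le _ _ _ _ Hge (is_lim_seq_const D1) L) as H. simpl in H.
  assert (D1pos : 0 < D1).
  { unfold D1, Sp. simpl. pose proof (hpos O). pose proof (hpos 1%nat).
    assert (0 < u + w - 2 * g).
    { assert ((u + w) ^ 2 - (2 * g) ^ 2 > 0).
      { replace ((u + w) ^ 2 - (2 * g) ^ 2) with ((u - w) ^ 2) by (simpl; nra).
        assert (u - w <> 0) by lra. apply pow2_gt_0 in H2. lra. }
      nra. }
    set (a0 := a O) in *. set (a1 := a 1%nat) in *.
    replace ((a0 * 1 + a1 * (u * 1)) * (a0 * 1 + a1 * (w * 1)) -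
      (a0 * 1 + a1 * (g * 1)) * ((a0 * 1 + a1 * (g * 1)) * 1))
      with (a0 * a1 * (u + w - 2 * g) + a1 * a1 * (u * w - g * g)) by ring.
    rewrite e. replace (u * w - u * w) with 0 by ring.
    assert (0 < a0 * a1) by (apply Rmult_lt_0_compat; lra).
    nra. }
  lra.
Qed.


Definition cc (R0 : R) (a : nat -> R) k := R0 * INR (k + 1) * a (k + 1)%nat / a k - INR k.

Lemma cc_mono (R0 : R) (a : nat -> R)
  (hdec : forall n,
     R0 * INR (n + 2) * a (n + 2)%nat / a (n + 1)%nat - INR (n + 1)
     <= R0 * INR (n + 1) * a (n + 1)%nat / a n - INR n) :
  forall k n, (k <= n)%nat -> cc R0 a n <= cc R0 a k.
Proof.
  intros k n H. induction H; [lra|].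
  eapply Rle_trans; [|exact IHle]. unfold cc.
  replace (S m + 1)%nat with (m + 2)%nat by lia.
  replace (S m) with (m + 1)%nat by lia. apply hdec.
Qed.

Lemma sum_nonneg_upto (f : nat -> R) N :
  (forall k, (k <= N)%nat -> 0 <= f k) -> 0 <= sum_f_R0 f N.
Proof.
  induction N; intros H; simpl. apply H; lia.
  assert (0 <= f (S N)) by (apply H; lia).
  assert (0 <= sum_f_R0 f N) by (apply IHN; intros; apply H; lia). lra.
Qed.

Definition Sc R0 a x N := sum_f_R0 (fun k => cc R0 a k * a k * x ^ k) N.

Lemma lin_E (R0 : R) (a : nat -> R) C V W v w N :
  sum_f_R0 (fun k => a k * (cc R0 a k - C) * (v ^ k * W - w ^ k * V)) N =
  C * (V * Sp a w N - W * Sp a v N) + (Sc R0 a v N * W - Sc R0 a w N * V).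
Proof. unfold Sp, Sc. induction N; simpl; [ring|]. rewrite IHN. ring. Qed.

Lemma E_nonneg (R0 : R) (a : nat -> R) (hpos : forall n, 0 < a n)
  (hdec : forall n,
     R0 * INR (n + 2) * a (n + 2)%nat / a (n + 1)%nat - INR (n + 1)
     <= R0 * INR (n + 1) * a (n + 1)%nat / a n - INR n) v w :
  0 <= v <= w -> forall N,
  0 <= Sc R0 a v N * Sp a w N - Sc R0 a w N * Sp a v N.
Proof.
  intros hvw N. induction N.
  { unfold Sc, Sp. simpl. lra. }
  set (C := cc R0 a (S N)). set (V := v ^ S N). set (W := w ^ S N).
  set (al := a (S N)).
  assert (Hb : 0 <= sum_f_R0 (fun k => a k * (cc R0 a k - C) * (v ^ k * W - w ^ k * V)) N).
  { apply sum_nonneg_upto. intros k hk.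
    - apply Rmult_le_pos; [apply Rmult_le_pos|].
      + apply Rlt_le, hpos.
      + assert (C <= cc R0 a k) by (apply cc_mono; auto; lia). lra.
      + unfold V, W. replace (S N) with (k + (S N - k))%nat by lia.
        rewrite !pow_add.
        assert (v ^ (S N - k) <= w ^ (S N - k)) by (apply pow_incr; lra).
        assert (0 <= v ^ k * w ^ k) by (apply Rmult_le_pos; apply pow_le; lra).
        replace (v ^ k * (w ^ k * w ^ (S N - k)) - w ^ k * (v ^ k * v ^ (S N - k)))
          with (v ^ k * w ^ k * (w ^ (S N - k) - v ^ (S N - k))) by ring.
        apply Rmult_le_pos; lra.
  }
  rewrite lin_E in Hb.
  unfold Sc, Sp in *. simpl sum_f_R0.
  change (v * v ^ N) with V. change (w * w ^ N) with W.
  fold C al.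
  set (Su := sum_f_R0 (fun k => a k * v ^ k) N) in *.
  set (Sw := sum_f_R0 (fun k => a k * w ^ k) N) in *.
  set (Scv := sum_f_R0 (fun k => cc R0 a k * a k * v ^ k) N) in *.
  set (Scw := sum_f_R0 (fun k => cc R0 a k * a k * w ^ k) N) in *.
  assert (0 < al) by apply hpos.
  replace ((Scv + C * al * V) * (Sw + al * W) - (Scw + C * al * W) * (Su + al * V))
    with (Scv * Sw - Scw * Su + al * (C * (V * Sw - W * Su) + (Scv * W - Scw * V))) by ring.
  apply Rplus_le_le_0_compat; auto. apply Rmult_le_pos; lra.
Qed.

Lemma pser_lim0 (a : nat -> R) x : ex_pseries a x ->
  is_lim_seq (fun N => sum_f_R0 (fun k => a k * x ^ k) N) (PSeries a x).
Proof.
  intros hx. pose proof (PSeries_correct a x hx) as H.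
  unfold is_pseries, is_series in H.
  eapply is_lim_seq_ext; [|exact H]. intro N. simpl.
  rewrite sum_n_Reals. apply sum_eq. intros i _.
  rewrite pow_n_pow. unfold scal; simpl. unfold mult; simpl. ring.
Qed.

Lemma cc_a (R0 : R) (a : nat -> R) k : a k <> 0 ->
  cc R0 a k * a k = R0 * PS_derive a k - INR k * a k.
Proof.
  intros h. unfold cc, PS_derive. rewrite Nat.add_1_r. field. auto.
Qed.

Lemma Sc_eq (R0 : R) (a : nat -> R) (hpos : forall n, 0 < a n) x N :
  Sc R0 a x N = R0 * sum_f_R0 (fun k => PS_derive a k * x ^ k) N
              - sum_f_R0 (fun k => INR k * a k * x ^ k) N.
Proof.
  unfold Sc. induction N; cbn [sum_f_R0].
  - rewrite cc_a by (apply Rgt_not_eq, hpos). change (INR 0) with 0. ring.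
  - rewrite IHN, cc_a by (apply Rgt_not_eq, hpos). ring.
Qed.

Lemma Q_eq (a : nat -> R) x N :
  sum_f_R0 (fun k => INR k * a k * x ^ k) (S N) =
  x * sum_f_R0 (fun k => PS_derive a k * x ^ k) N.
Proof.
  induction N.
  - simpl. unfold PS_derive. simpl. ring.
  - change (sum_f_R0 (fun k => INR k * a k * x ^ k) (S (S N))) with
      (sum_f_R0 (fun k => INR k * a k * x ^ k) (S N) + INR (S (S N)) * a (S (S N)) * x ^ (S (S N))).
    rewrite IHN. simpl sum_f_R0. unfold PS_derive. simpl pow. ring.
Qed.

Lemma Sc_lim (R0 : R) (a : nat -> R) (hR : 0 < R0)
  (hpos : forall n, 0 < a n)
  (hconv : forall x, Rabs x < R0 -> ex_pseries a x) x :
  0 <= x < R0 ->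
  is_lim_seq (fun N => Sc R0 a x N) ((R0 - x) * PSeries (PS_derive a) x).
Proof.
  intros hx.
  assert (hr : Rabs x < R0) by (rewrite Rabs_pos_eq; lra).
  pose proof (pser_lim0 _ _ (ex_pseries_derive a x (radius_ok R0 a hR hconv x hr))) as L.
  apply is_lim_seq_incr_1.
  apply is_lim_seq_ext with (u := fun N =>
     R0 * sum_f_R0 (fun k => PS_derive a k * x ^ k) (S N)
     - x * sum_f_R0 (fun k => PS_derive a k * x ^ k) N).
  { intro N. rewrite Sc_eq, Q_eq by auto. reflexivity. }
  replace ((R0 - x) * PSeries (PS_derive a) x) with
    (R0 * PSeries (PS_derive a) x - x * PSeries (PS_derive a) x) by ring.
  apply is_lim_seq_minus'.
  - apply is_lim_seq_incr_1 in L.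
    apply (is_lim_seq_scal_l _ R0 _ L).
  - apply (is_lim_seq_scal_l _ x _ L).
Qed.

Lemma ratio_mono (R0 : R) (a : nat -> R) (hR : 0 < R0)
  (hpos : forall n, 0 < a n)
  (hconv : forall x, Rabs x < R0 -> ex_pseries a x)
  (hdec : forall n,
     R0 * INR (n + 2) * a (n + 2)%nat / a (n + 1)%nat - INR (n + 1)
     <= R0 * INR (n + 1) * a (n + 1)%nat / a n - INR n) v w :
  0 <= v <= w -> w < R0 ->
  ((R0 - w) * PSeries (PS_derive a) w) * PSeries a v <=
  ((R0 - v) * PSeries (PS_derive a) v) * PSeries a w.
Proof.
  intros hvw hw.
  assert (Lv := Sc_lim R0 a hR hpos hconv v ltac:(lra)).
  assert (Lw := Sc_lim R0 a hR hpos hconv w ltac:(lra)).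
  assert (Fv := pser_lim R0 a hR hconv v ltac:(rewrite Rabs_pos_eq; lra)).
  assert (Fw := pser_lim R0 a hR hconv w ltac:(rewrite Rabs_pos_eq; lra)).
  pose proof (is_lim_seq_le (fun _ => 0) _ 0 _ (E_nonneg R0 a hpos hdec v w hvw)
     (is_lim_seq_const 0)
     (is_lim_seq_minus' _ _ _ _ (is_lim_seq_mult' _ _ _ _ Lv Fw) (is_lim_seq_mult' _ _ _ _ Lw Fv))) as H.
  simpl in H. lra.
Qed.


Definition Hf R0 a t := ln (PSeries a (R0 - exp t)).
Definition Hd R0 a t := - exp t * PSeries (PS_derive a) (R0 - exp t) / PSeries a (R0 - exp t).

Lemma H_deriv (R0 : R) (a : nat -> R) (hR : 0 < R0)
  (hpos : forall n, 0 < a n)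
  (hconv : forall x, Rabs x < R0 -> ex_pseries a x) t :
  exp t < R0 -> is_derive (Hf R0 a) t (Hd R0 a t).
Proof.
  intros ht. pose proof (exp_pos t).
  assert (hr : Rabs (R0 + - exp t) < R0) by (rewrite Rabs_pos_eq; lra).
  unfold Hf, Hd. auto_derive.
  - split; [|split; auto].
    + apply ex_derive_PSeries, (radius_ok R0 a hR hconv _ hr).
    + apply (F_pos R0 a hR hpos hconv); lra.
  - replace (Derive (fun x => PSeries a x) (R0 + - exp t)) with (Derive (PSeries a) (R0 + - exp t)) by reflexivity.
    rewrite Derive_PSeries by apply (radius_ok R0 a hR hconv _ hr).
    replace (R0 + - exp t) with (R0 - exp t) by ring. field.
    apply Rgt_not_eq, (F_pos R0 a hR hpos hconv); lra.
Qed.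

Lemma Hd_mono (R0 : R) (a : nat -> R) (hR : 0 < R0)
  (hpos : forall n, 0 < a n)
  (hconv : forall x, Rabs x < R0 -> ex_pseries a x)
  (hdec : forall n,
     R0 * INR (n + 2) * a (n + 2)%nat / a (n + 1)%nat - INR (n + 1)
     <= R0 * INR (n + 1) * a (n + 1)%nat / a n - INR n) t1 t2 :
  t1 <= t2 -> exp t2 < R0 -> Hd R0 a t2 <= Hd R0 a t1.
Proof.
  intros h12 h2.
  assert (e12 : exp t1 <= exp t2).
  { destruct (Req_dec t1 t2) as [->|n]; [lra|]. apply Rlt_le, exp_increasing; lra. }
  pose proof (exp_pos t1). pose proof (exp_pos t2).
  set (v1 := R0 - exp t1). set (v2 := R0 - exp t2).
  assert (E1 : exp t1 = R0 - v1) by (unfold v1; ring).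
  assert (E2 : exp t2 = R0 - v2) by (unfold v2; ring).
  unfold Hd. fold v1 v2. rewrite E1, E2.
  pose proof (ratio_mono R0 a hR hpos hconv hdec v2 v1 ltac:(unfold v1, v2; lra) ltac:(unfold v1; lra)) as M.
  assert (F1 : 0 < PSeries a v1) by (apply (F_pos R0 a hR hpos hconv); unfold v1; lra).
  assert (F2 : 0 < PSeries a v2) by (apply (F_pos R0 a hR hpos hconv); unfold v2; lra).
  set (A1 := (R0 - v1) * PSeries (PS_derive a) v1) in *.
  set (A2 := (R0 - v2) * PSeries (PS_derive a) v2) in *.
  replace (- (R0 - v2) * PSeries (PS_derive a) v2 / PSeries a v2) with (- (A2 / PSeries a v2)) by (unfold A2; field; lra).
  replace (- (R0 - v1) * PSeries (PS_derive a) v1 / PSeries a v1) with (- (A1 / PSeries a v1)) by (unfold A1; field; lra).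
  apply Ropp_le_contravar.
  apply (Rmult_le_reg_r (PSeries a v1 * PSeries a v2)); [nra|].
  replace (A1 / PSeries a v1 * (PSeries a v1 * PSeries a v2)) with (A1 * PSeries a v2) by (field; lra).
  replace (A2 / PSeries a v2 * (PSeries a v1 * PSeries a v2)) with (A2 * PSeries a v1) by (field; lra).
  lra.
Qed.

Lemma H_mid (R0 : R) (a : nat -> R) (hR : 0 < R0)
  (hpos : forall n, 0 < a n)
  (hconv : forall x, Rabs x < R0 -> ex_pseries a x)
  (hdec : forall n,
     R0 * INR (n + 2) * a (n + 2)%nat / a (n + 1)%nat - INR (n + 1)
     <= R0 * INR (n + 1) * a (n + 1)%nat / a n - INR n) s r :
  s < r -> exp r < R0 ->
  Hf R0 a s + Hf R0 a r <= 2 * Hf R0 a ((s + r) / 2).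
Proof.
  intros hsr hr.
  set (m := (s + r) / 2).
  assert (D : forall c, c <= r -> derivable_pt_lim (Hf R0 a) c (Hd R0 a c)).
  { intros c hc. apply is_derive_Reals, H_deriv; auto.
    destruct (Req_dec c r) as [->|n]; auto. eapply Rlt_trans; [|exact hr]. apply exp_increasing; lra. }
  destruct (MVT_cor2 (Hf R0 a) (Hd R0 a) s m ltac:(unfold m; lra)
     (fun c hc => D c ltac:(unfold m in hc; lra))) as [c1 [E1 h1]].
  destruct (MVT_cor2 (Hf R0 a) (Hd R0 a) m r ltac:(unfold m; lra)
     (fun c hc => D c ltac:(lra))) as [c2 [E2 h2]].
  assert (M : Hd R0 a c2 <= Hd R0 a c1).
  { apply (Hd_mono R0 a hR hpos hconv hdec); [lra|].
    destruct (Req_dec c2 r) as [->|n]; auto. eapply Rlt_trans; [|exact hr]. apply exp_increasing; lra. }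
  assert (m - s = r - m) by (unfold m; field).
  assert (0 < r - m) by (unfold m; lra).
  nra.
Qed.

Lemma B_ineq (R0 : R) (a : nat -> R) (hR : 0 < R0)
  (hpos : forall n, 0 < a n)
  (hconv : forall x, Rabs x < R0 -> ex_pseries a x)
  (hdec : forall n,
     R0 * INR (n + 2) * a (n + 2)%nat / a (n + 1)%nat - INR (n + 1)
     <= R0 * INR (n + 1) * a (n + 1)%nat / a n - INR n) u w g :
  0 < u < R0 -> 0 < w < R0 -> 0 < g -> g * g = u * w ->
  PSeries a (R0 - u) * PSeries a (R0 - w) <= PSeries a (R0 - g) ^ 2.
Proof.
  revert u w. cut (forall u w, u < w -> 0 < u < R0 -> 0 < w < R0 -> 0 < g -> g * g = u * w ->
    PSeries a (R0 - u) * PSeries a (R0 - w) <= PSeries a (R0 - g) ^ 2).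
  { intros K u w hu hw hg e. destruct (Rtotal_order u w) as [h|[h|h]].
    - apply K; auto.
    - subst w. assert (g = u) by nra. subst g. lra.
    - rewrite Rmult_comm. apply K; auto. lra. }
  intros u w huw hu hw hg e.
  set (s := ln u). set (r := ln w).
  assert (Es : exp s = u) by (apply exp_ln; lra).
  assert (Er : exp r = w) by (apply exp_ln; lra).
  assert (hsr : s < r) by (apply ln_increasing; lra).
  pose proof (H_mid R0 a hR hpos hconv hdec s r hsr ltac:(lra)) as H.
  assert (Em : exp ((s + r) / 2) = g).
  { pose proof (exp_pos ((s + r) / 2)).
    assert (exp ((s + r) / 2) * exp ((s + r) / 2) = g * g).
    { rewrite <- exp_plus. replace ((s + r) / 2 + (s + r) / 2) with (s + r) by field.
      rewrite exp_plus, Es, Er. auto. }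
    nra. }
  unfold Hf in H. rewrite Es, Er, Em in H.
  assert (g < R0) by nra.
  pose proof (F_pos R0 a hR hpos hconv (R0 - u) ltac:(lra)).
  pose proof (F_pos R0 a hR hpos hconv (R0 - w) ltac:(lra)).
  pose proof (F_pos R0 a hR hpos hconv (R0 - g) ltac:(lra)).
  rewrite <- ln_mult in H by auto.
  replace (2 * ln (PSeries a (R0 - g))) with (ln (PSeries a (R0 - g) ^ 2)) in H.
  2:{ simpl. rewrite Rmult_1_r, ln_mult by auto. ring. }
  destruct (Rle_or_lt (PSeries a (R0 - u) * PSeries a (R0 - w)) (PSeries a (R0 - g) ^ 2)) as [h|h]; auto.
  apply ln_increasing in h; [lra|]. apply pow_lt; auto.
Qed.


Lemma m_pos (R0 : R) (a : nat -> R) (hR : 0 < R0)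
  (hpos : forall n, 0 < a n)
  (hconv : forall x, Rabs x < R0 -> ex_pseries a x) x :
  0 < x < R0 -> 0 < mfun a R0 x.
Proof.
  intros hx. assert (0 < x ^ 2 / R0 < R0).
  { split. apply Rdiv_lt_0_compat; nra. apply Rmult_lt_reg_r with R0; auto.
    unfold Rdiv. rewrite Rmult_assoc, Rinv_l by lra. nra. }
  unfold mfun. apply Rdiv_lt_0_compat; apply (F_pos R0 a hR hpos hconv); lra.
Qed.

Lemma key (R0 : R) (a : nat -> R) (hR : 0 < R0)
  (hpos : forall n, 0 < a n)
  (hconv : forall x, Rabs x < R0 -> ex_pseries a x)
  (hdec : forall n,
     R0 * INR (n + 2) * a (n + 2)%nat / a (n + 1)%nat - INR (n + 1)
     <= R0 * INR (n + 1) * a (n + 1)%nat / a n - INR n) x y :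
  0 < x < R0 -> 0 < y < R0 ->
  mfun a R0 x * mfun a R0 y <= mfun a R0 (sqrt (x * y)) ^ 2 /\
  (x <> y -> mfun a R0 x * mfun a R0 y < mfun a R0 (sqrt (x * y)) ^ 2).
Proof.
  intros hx hy.
  set (u := x ^ 2 / R0). set (w := y ^ 2 / R0). set (g := x * y / R0).
  assert (hu : 0 < u < R0).
  { unfold u. split. apply Rdiv_lt_0_compat; nra. apply Rmult_lt_reg_r with R0; auto.
    unfold Rdiv. rewrite Rmult_assoc, Rinv_l by lra. nra. }
  assert (hw : 0 < w < R0).
  { unfold w. split. apply Rdiv_lt_0_compat; nra. apply Rmult_lt_reg_r with R0; auto.
    unfold Rdiv. rewrite Rmult_assoc, Rinv_l by lra. nra. }
  assert (hg : 0 < g) by (unfold g; apply Rdiv_lt_0_compat; nra).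
  assert (e : g * g = u * w) by (unfold g, u, w; field; lra).
  assert (gR : g < R0) by nra.
  assert (Eg : sqrt (x * y) ^ 2 / R0 = g).
  { unfold g. rewrite <- Rsqr_pow2, Rsqr_sqrt; [reflexivity|nra]. }
  unfold mfun. rewrite Eg. fold u w.
  pose proof (B_ineq R0 a hR hpos hconv hdec u w g hu hw hg e) as HB.
  pose proof (F_pos R0 a hR hpos hconv u ltac:(lra)) as Fu.
  pose proof (F_pos R0 a hR hpos hconv w ltac:(lra)) as Fw.
  pose proof (F_pos R0 a hR hpos hconv g ltac:(lra)) as Fg.
  pose proof (F_pos R0 a hR hpos hconv (R0 - u) ltac:(lra)) as Gu.
  pose proof (F_pos R0 a hR hpos hconv (R0 - w) ltac:(lra)) as Gw.
  pose proof (F_pos R0 a hR hpos hconv (R0 - g) ltac:(lra)) as Gg.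
  set (fu := PSeries a u) in *. set (fw := PSeries a w) in *. set (fg := PSeries a g) in *.
  set (hu' := PSeries a (R0 - u)) in *. set (hw' := PSeries a (R0 - w)) in *.
  set (hg' := PSeries a (R0 - g)) in *.
  assert (Hle : fg ^ 2 <= fu * fw).
  { destruct (Req_dec u w) as [E|n].
    - assert (g = u) by (rewrite E in e; nra). unfold fg, fu, fw. rewrite H, <- E. simpl. lra.
    - apply Rlt_le, (CS_strict R0 a hR hpos hconv u w g); auto. }
  assert (Eq : hu' / fu * (hw' / fw) = (hu' * hw') / (fu * fw)) by (field; lra).
  assert (Eq2 : (hg' / fg) ^ 2 = hg' ^ 2 / fg ^ 2) by (field; lra).
  rewrite Eq, Eq2.
  assert (0 < fg ^ 2) by (apply pow_lt; lra).
  split.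
  - apply Rmult_le_reg_r with (fu * fw * fg ^ 2); [nra|].
    replace (hu' * hw' / (fu * fw) * (fu * fw * fg ^ 2)) with (hu' * hw' * fg ^ 2) by (field; lra).
    replace (hg' ^ 2 / fg ^ 2 * (fu * fw * fg ^ 2)) with (hg' ^ 2 * (fu * fw)) by (field; lra).
    assert (0 < hu' * hw') by nra.
    nra.
  - intros nxy.
    assert (u <> w).
    { intro E. apply nxy. unfold u, w in E.
      assert (x ^ 2 = y ^ 2).
      { apply Rmult_eq_reg_r with (/ R0); [exact E|]. apply Rinv_neq_0_compat; lra. }
      nra. }
    pose proof (CS_strict R0 a hR hpos hconv u w g hu hw hg e H0) as S.
    fold fu fw fg in S.
    apply Rmult_lt_reg_r with (fu * fw * fg ^ 2); [nra|].
    replace (hu' * hw' / (fu * fw) * (fu * fw * fg ^ 2)) with (hu' * hw' * fg ^ 2) by (field; lra).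
    replace (hg' ^ 2 / fg ^ 2 * (fu * fw * fg ^ 2)) with (hg' ^ 2 * (fu * fw)) by (field; lra).
    assert (0 < hu' * hw') by nra.
    nra.
Qed.


Lemma sq_alg P M : 0 < P -> 0 < M ->
  (P <= M ^ 2 -> sqrt P <= M) /\ (P < M ^ 2 -> sqrt P < M) /\
  (1 / P <= M ^ 2 -> 1 / M <= sqrt P) /\ (1 / P < M ^ 2 -> 1 / M < sqrt P).
Proof.
  intros hP hM. pose proof (sqrt_lt_R0 P hP) as hq. pose proof (sqrt_sqrt P (Rlt_le _ _ hP)) as E.
  set (q := sqrt P) in *. rewrite <- E.
  assert (Ei : 1 / (q * q) = (1 / q) ^ 2) by (field; lra).
  assert (0 < 1 / q) by (apply Rdiv_lt_0_compat; lra).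
  rewrite Ei.
  split; [|split; [|split]]; intros h.
  - nra.
  - nra.
  - assert (1 / q <= M) by nra.
    apply Rmult_le_reg_r with (M * q); [nra|].
    replace (1 / M * (M * q)) with q by (field; lra).
    replace (1 / q) with (/ q) in * by (field; lra).
    assert (/ q * q = 1) by (field; lra). nra.
  - assert (1 / q < M) by nra.
    apply Rmult_lt_reg_r with (M * q); [nra|].
    replace (1 / M * (M * q)) with q by (field; lra).
    replace (1 / q) with (/ q) in * by (field; lra).
    assert (/ q * q = 1) by (field; lra). nra.
Qed.

Lemma compl (R0 : R) (a : nat -> R) (hR : 0 < R0)
  (hpos : forall n, 0 < a n)
  (hconv : forall x, Rabs x < R0 -> ex_pseries a x) x :
  0 < x < R0 ->
  0 < sqrt (R0 ^ 2 - x ^ 2) < R0 /\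
  mfun a R0 (sqrt (R0 ^ 2 - x ^ 2)) = 1 / mfun a R0 x /\
  sqrt (R0 ^ 2 - x ^ 2) ^ 2 = R0 ^ 2 - x ^ 2.
Proof.
  intros hx.
  assert (p : 0 < R0 ^ 2 - x ^ 2) by nra.
  assert (E : sqrt (R0 ^ 2 - x ^ 2) ^ 2 = R0 ^ 2 - x ^ 2).
  { rewrite <- Rsqr_pow2, Rsqr_sqrt; lra. }
  pose proof (sqrt_lt_R0 _ p).
  split; [split; [auto|]|split; auto].
  - nra.
  - unfold mfun. rewrite E.
    replace (R0 - (R0 ^ 2 - x ^ 2) / R0) with (x ^ 2 / R0) by (field; lra).
    replace ((R0 ^ 2 - x ^ 2) / R0) with (R0 - x ^ 2 / R0) by (field; lra).
    assert (0 < x ^ 2 / R0 < R0).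
    { split. apply Rdiv_lt_0_compat; nra. apply Rmult_lt_reg_r with R0; auto.
      unfold Rdiv. rewrite Rmult_assoc, Rinv_l by lra. nra. }
    pose proof (F_pos R0 a hR hpos hconv (x ^ 2 / R0) ltac:(lra)).
    pose proof (F_pos R0 a hR hpos hconv (R0 - x ^ 2 / R0) ltac:(lra)).
    field. lra.
Qed.

Theorem theorem1p5 (R0 : R) (a : nat -> R)
  (hR : 0 < R0)
  (hpos : forall n, 0 < a n)
  (hconv : forall x, Rabs x < R0 -> ex_pseries a x)
  (hdec : forall n,
     R0 * INR (n + 2) * a (n + 2)%nat / a (n + 1)%nat - INR (n + 1)
     <= R0 * INR (n + 1) * a (n + 1)%nat / a n - INR n) :
  forall x y, 0 < x < R0 -> 0 < y < R0 ->
    let m := mfun a R0 in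
    let z := sqrt (sqrt ((R0 ^ 2 - x ^ 2) * (R0 ^ 2 - y ^ 2))) in
    (1 / m z <= sqrt (m x * m y) /\ sqrt (m x * m y) <= m (sqrt (x * y))) /\
    (1 / m z = sqrt (m x * m y) <-> x = y) /\
    (sqrt (m x * m y) = m (sqrt (x * y)) <-> x = y).
Proof.
  intros x y hx hy m z.
  destruct (compl R0 a hR hpos hconv x hx) as [hx' [mx' ex']].
  destruct (compl R0 a hR hpos hconv y hy) as [hy' [my' ey']].
  set (x' := sqrt (R0 ^ 2 - x ^ 2)) in *. set (y' := sqrt (R0 ^ 2 - y ^ 2)) in *.
  assert (Ez : z = sqrt (x' * y')).
  { unfold z, x', y'. rewrite (sqrt_mult (R0 ^ 2 - x ^ 2)); [reflexivity| |]; nra. }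
  assert (mxp := m_pos R0 a hR hpos hconv x hx).
  assert (myp := m_pos R0 a hR hpos hconv y hy).
  assert (xyR : 0 < sqrt (x * y) < R0).
  { assert (0 < x * y) by nra. split. apply sqrt_lt_R0; auto.
    rewrite <- (sqrt_pow2 R0) by lra. apply sqrt_lt_1_alt. simpl. nra. }
  assert (zR : 0 < z < R0).
  { rewrite Ez. assert (0 < x' * y') by nra. split. apply sqrt_lt_R0; auto.
    rewrite <- (sqrt_pow2 R0) by lra. apply sqrt_lt_1_alt. simpl. nra. }
  assert (mxy := m_pos R0 a hR hpos hconv _ xyR).
  assert (mz := m_pos R0 a hR hpos hconv _ zR).
  destruct (key R0 a hR hpos hconv hdec x y hx hy) as [K1 K2].
  destruct (key R0 a hR hpos hconv hdec x' y' hx' hy') as [K1' K2'].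
  rewrite <- Ez in K1', K2'. rewrite mx', my' in K1', K2'.
  fold m in K1, K2, K1', K2', mxp, myp, mxy, mz.
  assert (P : 0 < m x * m y) by nra.
  assert (Einv : 1 / m x * (1 / m y) = 1 / (m x * m y)) by (field; lra).
  rewrite Einv in K1', K2'.
  destruct (sq_alg (m x * m y) (m (sqrt (x * y))) P mxy) as [S1 [S2 _]].
  destruct (sq_alg (m x * m y) (m z) P mz) as [_ [_ [S3 S4]]].
  assert (Eqxy : x = y -> 1 / m z = sqrt (m x * m y) /\ sqrt (m x * m y) = m (sqrt (x * y))).
  { intros <-. rewrite sqrt_square by lra.
    assert (x' = y') by (unfold x', y'; reflexivity). rewrite Ez, <- H, sqrt_square by lra.
    change (m x') with (mfun a R0 x'). rewrite mx'. rewrite (sqrt_square x) by lra.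
    fold m. split; [field; lra | reflexivity]. }
  split; [split|split; split].
  - apply S3; auto.
  - apply S1; auto.
  - intros h. destruct (Req_dec x y) as [|n]; auto.
    assert (x' <> y').
    { intro E. apply n.
      assert (R0 ^ 2 - x ^ 2 = R0 ^ 2 - y ^ 2).
      { rewrite <- ex', <- ey', E. reflexivity. }
      nra. }
    pose proof (S4 (K2' H)). lra.
  - intros h; apply Eqxy; auto.
  - intros h. destruct (Req_dec x y) as [|n]; auto.
    pose proof (S2 (K2 n)). lra.
  - intros h; apply Eqxy; auto.
Qed.
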